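(* Let $R$ be a commutative ring with identity, $I$ an ideal of $R$ and $M$ an $R$-module. If $M$ is $I$-prime, then the submodule $\Gamma_I(M)$ of $M$ is an $I$-coprime $R$-module. If $M$ is $I$-coprime, then the $R$-module $\Lambda_I(M)$ is an $I$-prime $R$-module.
   Context: All rings are commutative with identity and modules are unital. An $R$-module $M$ is $I$-prime if for all $m\in M$, $Im=0$ implies $m=0$ or $IM=0$; it is $I$-coprime if $IM=0$ or $IM=M$. $\Gamma_I(M)=\{m\in M : I^k m=0 \text{ for some } k\geq 1\}$ and $\Lambda_I(M)=\varprojlim_k M/I^kM$. *)

(* Defs.v *)
From mathcomp Require Import all_boot all_algebra.
From mathcomp Require Import functions.
Set Implicit Arguments. Unset Strict Implicit. Unset Printing Implicit Defensive.
Import GRing.Theory.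
Local Open Scope ring_scope.

Definition is_ideal (R : comPzRingType) (I : R -> Prop) : Prop :=
  [/\ I 0, (forall a b, I a -> I b -> I (a + b)) &
      (forall r a, I a -> I (r * a))].

Definition idealX (R : comPzRingType) (I : R -> Prop) (k : nat) : R -> Prop :=
  fun x => exists n (r : 'I_n -> R) (a : 'I_n -> 'I_k -> R),
    (forall i j, I (a i j)) /\ x = \sum_(i < n) r i * \prod_(j < k) a i j.

Definition idealmul (R : comPzRingType) (V : lmodType R)
  (J : R -> Prop) (C : V -> Prop) : V -> Prop :=
  fun w => exists n (a : 'I_n -> R) (c : 'I_n -> V),
    (forall i, J (a i)) /\ (forall i, C (c i)) /\ w = \sum_(i < n) a i *: c i.

(* I-prime / I-coprime for a subquotient C/N of a module V, where N <= C are
   submodules of V (elements of C/N are represented by elements of C; the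
   zero submodule of C/N corresponds to N). *)
Definition Iprime_sq (R : comPzRingType) (V : lmodType R)
  (I : R -> Prop) (C N : V -> Prop) : Prop :=
  forall v, C v ->
    (forall a, I a -> N (a *: v)) ->            (* I v = 0 in C/N *)
    N v \/ (forall w, idealmul I C w -> N w).   (* v = 0 or I (C/N) = 0 *)

Definition Icoprime_sq (R : comPzRingType) (V : lmodType R)
  (I : R -> Prop) (C N : V -> Prop) : Prop :=
  (forall w, idealmul I C w -> N w)                       (* I (C/N) = 0 *)
  \/ (forall v, C v -> exists w, idealmul I C w /\ N (v - w)). (* I (C/N) = C/N *)

Definition Iprime (R : comPzRingType) (M : lmodType R) (I : R -> Prop) :=
  Iprime_sq I (fun _ : M => True) (fun m => m = 0).
Definition Icoprime (R : comPzRingType) (M : lmodType R) (I : R -> Prop) :=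
  Icoprime_sq I (fun _ : M => True) (fun m => m = 0).

Definition Gamma (R : comPzRingType) (M : lmodType R) (I : R -> Prop) : M -> Prop :=
  fun m => exists k, (1 <= k)%N /\ forall a, idealX I k a -> a *: m = 0.

Definition IkM (R : comPzRingType) (M : lmodType R) (I : R -> Prop) (k : nat)
  : M -> Prop := idealmul (idealX I k) (fun _ : M => True).

(* Lambda_I(M) = lim_k M/I^k M (k >= 1), realised as the subquotient
   LamC/LamN of the module nat -> M: a compatible family (x_k mod I^k M)_k is
   represented by a sequence x of elements of M with x_(k+1) - x_k in I^k M,
   and two representatives define the same element iff their difference lies
   in LamN = { x | x_k in I^k M for all k >= 1 }. *)
Definition LamC (R : comPzRingType) (M : lmodType R) (I : R -> Prop)
  : (nat -> M) -> Prop :=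
  fun x => forall k, (1 <= k)%N -> IkM I k (x k.+1 - x k).
Definition LamN (R : comPzRingType) (M : lmodType R) (I : R -> Prop)
  : (nat -> M) -> Prop :=
  fun x => forall k, (1 <= k)%N -> IkM I k (x k).

(* Main.v *)
Require Import Defs.
From mathcomp Require Import all_boot all_algebra.
From mathcomp Require Import functions.
From Stdlib Require Import Classical.
Import GRing.Theory.
Local Open Scope ring_scope.

Section Aux.
Variables (R : comPzRingType) (V : lmodType R).

Lemma im0 (J : R -> Prop) (C : V -> Prop) : idealmul J C 0.
Proof. exists 0%N, (fun _ => 0), (fun _ => 0); split; [by case|split; [by case|]]. by rewrite big_ord0. Qed.

Lemma im1 (J : R -> Prop) (C : V -> Prop) a c : J a -> C c -> idealmul J C (a *: c).
Proof. move=> Ja Cc; exists 1%N, (fun _ => a), (fun _ => c); split=> //; split=> //.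
by rewrite big_ord1. Qed.

Lemma imD (J : R -> Prop) (C : V -> Prop) w1 w2 :
  idealmul J C w1 -> idealmul J C w2 -> idealmul J C (w1 + w2).
Proof.
move=> [n1 [a1 [c1 [J1 [C1 ->]]]]] [n2 [a2 [c2 [J2 [C2 ->]]]]].
exists (n1 + n2)%N,
  (fun i => match fintype.split i with inl j => a1 j | inr j => a2 j end),
  (fun i => match fintype.split i with inl j => c1 j | inr j => c2 j end).
split; first by move=> i; case: (fintype.split i).
split; first by move=> i; case: (fintype.split i).
rewrite big_split_ord; congr (_ + _); apply: eq_bigr => i _.
- by rewrite (unsplitK (inl i)).
- by rewrite (unsplitK (inr i)).
Qed.

Lemma imsum (J : R -> Prop) (C : V -> Prop) n (F : 'I_n -> V) :
  (forall i, idealmul J C (F i)) -> idealmul J C (\sum_(i < n) F i).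
Proof.
elim: n F => [|n IH] F HF; first by rewrite big_ord0; apply: im0.
rewrite big_ord_recr; apply: imD; last exact: HF.
by apply: IH => i; apply: HF.
Qed.
End Aux.

Section Aux2.
Variables (R : comPzRingType) (I : R -> Prop) (hI : is_ideal I).

Lemma idX0 : idealX I 0 1.
Proof.
case: hI => I0 _ _.
exists 1%N, (fun _ => 1), (fun _ _ => 0); split; first by move=> ? [].
by rewrite big_ord1 big_ord0 mulr1.
Qed.

Lemma idXS k x b : idealX I k x -> I b -> idealX I k.+1 (x * b).
Proof.
move=> [n [r [a [Ha ->]]]] Ib.
exists n, r, (fun i j => match unlift ord_max j with Some j' => a i j' | None => b end).
split.
  by move=> i j; case: (unlift ord_max j).
rewrite mulr_suml; apply: eq_bigr => i _.
rewrite big_ord_recr /= unlift_none -mulrA; congr (_ * (_ * _)).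
apply: eq_bigr => j _.
have -> : widen_ord (leqnSn k) j = lift ord_max j by apply: val_inj; rewrite /= /bump leqNgt ltn_ord.
by rewrite liftK.
Qed.
End Aux2.

Theorem mainTheorem3 (R : comPzRingType) (M : lmodType R) (I : R -> Prop)
  (hI : is_ideal I) :
  (@Iprime R M I -> Icoprime_sq I (@Gamma R M I) (fun m : M => m = 0)) /\
  (@Icoprime R M I -> Iprime_sq I (@LamC R M I) (@LamN R M I)).
Proof.
split.
- move=> Hp; left.
  have key : forall a (c : M), I a -> Gamma I c -> a *: c = 0.
    move=> a c Ia [k [_ Hk]].
    case: (classic (forall w, idealmul I (fun _ : M => True) w -> w = 0)) => IM0.
      by apply: IM0; apply: im1.
    suff: c = 0 by move=> ->; rewrite scaler0.
    elim: k c Hk => [|k IH] c Hk.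
      by rewrite -(scale1r c); apply: Hk; apply: idX0.
    case: (Hp c Logic.I) => // + .
    move=> b Ib; apply: IH => x Hx.
    by rewrite scalerA; apply: Hk; apply: idXS.
  move=> w [n [a [c [Ja [Cc ->]]]]].
  by apply: big1 => i _; apply: key.
- case=> [IM0 | IMM].
  + move=> x Cx Hx; right => w [n [a [c [Ja [Cc ->]]]]] k _.
    rewrite fct_sumE.
    have -> : \sum_(i < n) (a i *: c i) k = 0.
      by apply: big1 => i _; rewrite scalrfctE; apply: IM0; apply: im1.
    exact: im0.
  + have all : forall k (m : M), IkM I k m.
      elim=> [|k IH] m.
        by rewrite -(scale1r m); apply: im1 => //; apply: idX0.
      have [w [[n [a [c [Ja [_ ->]]]]] Hw]] := IMM m Logic.I.
      have -> : m = \sum_(i < n) a i *: c i.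
        by apply/eqP; rewrite -subr_eq0; apply/eqP.
      apply: imsum => i.
      have [n' [a' [c' [Ja' [_ ->]]]]] := IH (c i).
      rewrite scaler_sumr; apply: imsum => j.
      rewrite scalerA; apply: im1 => //.
      by rewrite mulrC; apply: idXS.
    move=> x _ _; left => k _; exact: all.
Qed.
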